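(* Let $k\in\mathbb{N}$ with $k\ge2$. For every actively connected set $S$, there exists a collection $\mathcal{S}_k$ of subsets of $S$, each containing at most $k$ elements, such that $\mathrm{cost}(\mathcal{S}_k)\le\big(1+\frac{1}{\lfloor\log_2 k\rfloor}\big)\cdot\mathrm{cost}(S)$ and $\mathrm{gain}(\mathcal{S}_k)=\mathrm{gain}(\{S\})$.
   Context: Steiner Forest: finite undirected graph $G=(V,E)$, non-negative edge costs $(c_e)_{e\in E}$, set $\mathcal{D}$ of demand pairs $\{a,b\}\subseteq V$ (partners). For $U\subseteq V$, $\delta(U)$ is the set of edges with exactly one endpoint in $U$. The $\varepsilon$-extended moat-growing algorithm (fixed $\varepsilon\ge0$): time $t$ increases continuously from $0$ at unit rate; it maintains tight edges $F$ (initially empty), duals $y_S(t)\ge0$ (initially $0$), and budgets of components (initially $0$). $\mathcal{C}^t$ is the family of vertex sets of connected components of $(V,F)$. A component is demand-active if it contains a vertex not connected in $(V,F)$ to some partner; budget-active if not demand-active but with positive budget; active if either; $\mathcal{A}^t$ is the set of active components. Each $y_S$, $S\in\mathcal{A}^t$, grows at unit rate; budgets of demand-active components grow at rate $\varepsilon$ and of budget-active ones decrease at rate $1$; an edge $e$ with $\sum_{S:e\in\delta(S)}y_S(t)=c_e$ becomes tight and is added to $F$; merging components add budgets. The deactivation time $\tau_v$ of $v$ is the largest $t$ such that for all $s<t$, $v$ lies in a set of $\mathcal{A}^s$. Vertices $u,v$ are actively connected if for some $t$ they lie in a common set of $\mathcal{C}^t$ and $\tau_u,\tau_v\ge t$;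 this is an equivalence relation and a set is actively connected if contained in one equivalence class. For a collection $\mathcal{S}$ of actively connected sets, $\mathcal{A}^t/\mathcal{S}$ arises from $\mathcal{A}^t$ by merging sets of $\mathcal{A}^t$ into a single set whenever they are intersected by the same $S\in\mathcal{S}$ (transitively), and $\mathrm{gain}(\mathcal{S})=2\int_0^\infty(|\mathcal{A}^t|-|\mathcal{A}^t/\mathcal{S}|)\,dt$. For $S\subseteq V$, $\mathrm{cost}(S)$ is the minimum cost $\sum_{e\in F}c_e$ of an edge set $F\subseteq E$ such that all vertices of $S$ lie in one connected component of $(V,F)$; $\mathrm{cost}(\mathcal{S})=\sum_{S\in\mathcal{S}}\mathrm{cost}(S)$. *)

(* Defs.v *)
From HB Require Import structures.
From mathcomp Require Import all_boot all_order all_algebra.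
From mathcomp Require Import all_classical all_reals all_analysis.
Set Implicit Arguments. Unset Strict Implicit. Unset Printing Implicit Defensive.
Import Order.TTheory GRing.Theory Num.Theory.
Local Open Scope ring_scope.

Section SteinerForest.
Variables (R : realType) (V E : finType) (eu ev : E -> V).

Definition adj (F : {set E}) : rel V := fun x y =>
  [exists e in F, ((eu e == x) && (ev e == y)) || ((eu e == y) && (ev e == x))].

Definition comp (F : {set E}) (x : V) : {set V} := [set y | connect (adj F) x y].

Definition comps (F : {set E}) : {set {set V}} := [set comp F x | x in [set: V]].

Definition crosses (e : E) (S : {set V}) : bool := (eu e \in S) != (ev e \in S).

Definition connects (F : {set E}) (S : {set V}) : bool :=
  [forall x in S, forall y in S, connect (adj F) x y].

Definition cost (c : E -> R) (S : {set V}) : \bar R :=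
  \big[Order.min/+oo%E]_(F : {set E} | connects F S) (\sum_(e in F) c e)%:E.

Definition demand_active (D : {set {set V}}) (F : {set E}) (S : {set V}) : bool :=
  [exists d in D, exists a in d, exists b in d, (a \in S) && ~~ connect (adj F) a b].

Definition tmeas (P : R -> Prop) (t : R) : R :=
  fine (lebesgue_measure [set s : R | 0 <= s /\ s < t /\ P s]%classic).

(* Run of the algorithm described by F t (tight edges at time t) and
   Act t (the family A^t of active components at time t). *)
Variables (c : E -> R) (D : {set {set V}}) (eps : R)
          (F : R -> {set E}) (Act : R -> {set {set V}}).

Definition yS (S : {set V}) (t : R) : R := tmeas (fun s => S \in Act s) t.

Definition load (e : E) (t : R) : R := \sum_(S : {set V} | crosses e S) yS S t.

(* budget of the component S at time t: budgets start at 0, add on merging,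
   grow at rate eps while demand-active and decrease at rate 1 while
   budget-active; summing over all earlier components T contained in S. *)
Definition bud (S : {set V}) (t : R) : R :=
  \sum_(T : {set V} | T \subset S)
     (eps * tmeas (fun s => T \in Act s /\ demand_active D (F s) T) t
      - tmeas (fun s => T \in Act s /\ ~~ demand_active D (F s) T) t).

Definition valid_run : Prop :=
  [/\ (forall t, 0 <= t -> F t = [set e | c e <= load e t]),
      (forall t, 0 <= t -> Act t =
          [set S in comps (F t) | demand_active D (F t) S || (0 < bud S t)]) &
      (exists s : seq R, forall t1 t2, 0 <= t1 -> t1 <= t2 ->
          (forall b, b \in s -> ~ (t1 < b /\ b <= t2)) ->
          F t1 = F t2 /\ Act t1 = Act t2)].

(* deactivation time tau_v (in \bar R, +oo if v never deactivates) *)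
Definition tau (v : V) : \bar R :=
  ereal_sup ((fun t : R => t%:E) @`
    [set t : R | 0 <= t /\ forall s, 0 <= s -> s < t ->
                   exists2 S, S \in Act s & v \in S])%classic.

Definition act_conn (u v : V) : Prop :=
  exists t : R, [/\ 0 <= t, v \in comp (F t) u, (t%:E <= tau u)%E & (t%:E <= tau v)%E].

Definition act_conn_set (S : {set V}) : Prop :=
  forall u v, u \in S -> v \in S -> act_conn u v.

(* A^t / Ss: merge sets of A^t intersected by a common member of Ss, transitively *)
Definition mrel (Ss : {set {set V}}) (t : R) : rel {set V} := fun X Y =>
  [&& X \in Act t, Y \in Act t &
      [exists S in Ss, ~~ [disjoint S & X] && ~~ [disjoint S & Y]]].

Definition merged (Ss : {set {set V}}) (t : R) : {set {set V}} :=
  [set \bigcup_(Y in Act t | connect (mrel Ss t) X Y) Y | X in Act t].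

Definition gain (Ss : {set {set V}}) : \bar R :=
  (2%:E * \int[lebesgue_measure]_(t in [set t : R | (0 <= t)%R]%classic)
            ((#|Act t|)%:R - (#|merged Ss t|)%:R)%:E)%E.

End SteinerForest.

(* Main.v *)
Require Import Defs.
From HB Require Import structures.
From mathcomp Require Import all_boot all_order all_algebra.
From mathcomp Require Import all_classical all_reals all_analysis.
From mathcomp Require Import ring lra.
Import Order.TTheory GRing.Theory Num.Theory.
Local Open Scope ring_scope.
Set Implicit Arguments. Unset Strict Implicit. Unset Printing Implicit Defensive.


Section Cost.
Variables (R : realType) (V E : finType) (eu ev : E -> V) (c : E -> R).
Hypothesis c_ge0 : forall e, 0 <= c e.

Lemma adjC (F : {set E}) (x y : V) : adj eu ev F x y = adj eu ev F y x.
Proof.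
rewrite /adj; apply/existsP/existsP => -[e /andP[eF H]]; exists e;
  rewrite eF /=; by rewrite orbC.
Qed.

Lemma adj_sym (F : {set E}) : connect_sym (adj eu ev F).
Proof. apply: sym_connect_sym => x y; exact: adjC. Qed.

Lemma adj_sub (F1 F2 : {set E}) : F1 \subset F2 -> forall x y, adj eu ev F1 x y -> adj eu ev F2 x y.
Proof.
move=> sF x y /existsP[e /andP[eF H]]; apply/existsP; exists e.
by rewrite (fintype.subsetP sF _ eF).
Qed.

Lemma connect_adj_sub (F1 F2 : {set E}) : F1 \subset F2 -> forall x y,
  connect (adj eu ev F1) x y -> connect (adj eu ev F2) x y.
Proof.
move=> sF; apply: connect_sub => x y H; apply: connect1; exact: adj_sub H.
Qed.

Lemma adj_edge (F : {set E}) (e : E) : e \in F -> adj eu ev F (eu e) (ev e).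
Proof. by move=> eF; apply/existsP; exists e; rewrite eF !eqxx. Qed.

Lemma connects_mono (F1 F2 : {set E}) (S : {set V}) : F1 \subset F2 -> connects eu ev F1 S -> connects eu ev F2 S.
Proof.
move=> sF /forallP H; apply/forallP => x; apply/implyP => xS; apply/forallP => y;
apply/implyP => yS.
have := H x; move/implyP/(_ xS)/forallP/(_ y)/implyP/(_ yS).
exact: connect_adj_sub.
Qed.

Lemma connects_sub (F : {set E}) (A B : {set V}) : A \subset B -> connects eu ev F B -> connects eu ev F A.
Proof.
move=> sAB /forallP H; apply/forallP => x; apply/implyP => xS; apply/forallP => y;
apply/implyP => yS.
have := H x; move/implyP/(_ (fintype.subsetP sAB _ xS))/forallP/(_ y)/implyP.
by apply; apply: (fintype.subsetP sAB).
Qed.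

Lemma connectsP (F : {set E}) (S : {set V}) : reflect (forall x y, x \in S -> y \in S -> connect (adj eu ev F) x y)
  (connects eu ev F S).
Proof.
apply: (iffP forallP) => H.
  by move=> x y xS yS; have := H x; move/implyP/(_ xS)/forallP/(_ y)/implyP/(_ yS).
move=> x; apply/implyP => xS; apply/forallP => y; apply/implyP => yS; exact: H.
Qed.

Lemma connects_union (F1 F2 : {set E}) (A B : {set V}) (x : V) : x \in A -> x \in B ->
  connects eu ev F1 A -> connects eu ev F2 B -> connects eu ev (F1 :|: F2) (A :|: B).
Proof.
move=> xA xB /connectsP H1 /connectsP H2; apply/connectsP.
have s1 : F1 \subset F1 :|: F2 by apply: finset.subsetUl.
have s2 : F2 \subset F1 :|: F2 by apply: finset.subsetUr.
have C1 a b : a \in A -> b \in A -> connect (adj eu ev (F1 :|: F2)) a b.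
  by move=> aA bA; apply: connect_adj_sub s1 _ _ (H1 _ _ aA bA).
have C2 a b : a \in B -> b \in B -> connect (adj eu ev (F1 :|: F2)) a b.
  by move=> aA bA; apply: connect_adj_sub s2 _ _ (H2 _ _ aA bA).
move=> a b; rewrite !inE => /orP[aA|aB] /orP[bA|bB].
- exact: C1.
- by apply: connect_trans (C1 _ _ aA xA) (C2 _ _ xB bB).
- by apply: connect_trans (C2 _ _ aB xB) (C1 _ _ xA bA).
- exact: C2.
Qed.

Lemma sumc_ge0 (F : {set E}) : 0 <= \sum_(e in F) c e.
Proof. by apply: sumr_ge0 => e _; apply: c_ge0. Qed.

Lemma sumc_setU (F1 F2 : {set E}) :
  \sum_(e in F1 :|: F2) c e <= \sum_(e in F1) c e + \sum_(e in F2) c e.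
Proof.
rewrite (big_mkcond (fun e => e \in F1 :|: F2)) (big_mkcond (fun e => e \in F1))
  (big_mkcond (fun e => e \in F2)) -big_split /=.
apply: ler_sum => e _; rewrite inE.
case: (e \in F1); case: (e \in F2) => //=; rewrite ?addr0 ?add0r //.
by rewrite lerDl c_ge0.
Qed.

Lemma cost_le (F : {set E}) (S : {set V}) : connects eu ev F S -> (cost eu ev c S <= (\sum_(e in F) c e)%:E)%E.
Proof. move=> H; rewrite /cost; exact: (@bigmin_le_cond _ _ _ _ F (fun F => connects eu ev F S)). Qed.

Lemma cost_cases (S : {set V}) : cost eu ev c S = +oo%E \/
  exists2 F, connects eu ev F S & cost eu ev c S = (\sum_(e in F) c e)%:E.
Proof.
rewrite /cost; apply: (big_ind (fun x => x = +oo%E \/ exists2 F, connects eu ev F S & x = (\sum_(e in F) c e)%:E)).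
- by left.
- move=> x y Hx Hy; rewrite /Order.min; case: ifP => _; [exact: Hx | exact: Hy].
- by move=> F HF; right; exists F.
Qed.

Lemma cost_ge0 (S : {set V}) : (0 <= cost eu ev c S)%E.
Proof.
case: (cost_cases S) => [->|[F _ ->]]; first by rewrite leey.
by rewrite lee_fin sumc_ge0.
Qed.

Lemma cost_mono (A B : {set V}) : A \subset B -> (cost eu ev c A <= cost eu ev c B)%E.
Proof.
move=> sAB; case: (cost_cases B) => [->|[F HF ->]]; first by rewrite leey.
apply: cost_le; exact: connects_sub HF.
Qed.

Lemma cost_union (A B : {set V}) (x : V) : x \in A -> x \in B ->
  (cost eu ev c (A :|: B) <= cost eu ev c A + cost eu ev c B)%E.
Proof.
move=> xA xB.
case: (cost_cases A) => [->|[F1 H1 ->]];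
  case: (cost_cases B) => [->|[F2 H2 ->]]; rewrite ?addye ?addey ?leey //.
apply: le_trans (cost_le (connects_union xA xB H1 H2)) _.
by rewrite -EFinD lee_fin sumc_setU.
Qed.

Lemma cost_edge (e : E) : (cost eu ev c [set eu e; ev e] <= (c e)%:E)%E.
Proof.
have H : connects eu ev [set e] [set eu e; ev e].
  apply/connectsP => a b; rewrite !inE => /orP[] /eqP -> /orP[] /eqP ->;
  rewrite ?connect0 //; apply: connect1;
  first [exact: (adj_edge (set11 e)) | rewrite adjC; exact: (adj_edge (set11 e))].
by apply: le_trans (cost_le H) _; rewrite big_set1.
Qed.

Lemma cost_set1 (x : V) : cost eu ev c [set x] = 0%E.
Proof.
apply/eqP; rewrite eq_le cost_ge0 andbT.
have H : connects eu ev (finset.set0 : {set E}) [set x].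
  by apply/connectsP => a b; rewrite !inE => /eqP -> /eqP ->.
by apply: le_trans (cost_le H) _; rewrite big_set0.
Qed.

End Cost.


Inductive bt (V : Type) := Lf of V | Nd of V & bt V & bt V.
Arguments Lf {V}.
Arguments Nd {V}.

Section Trees.
Variables (R : realType) (V : eqType) (d : V -> V -> R).

Definition root (t : bt V) := match t with Lf v => v | Nd v _ _ => v end.
Fixpoint leaves (t : bt V) : seq V :=
  match t with Lf v => [:: v] | Nd _ l r => leaves l ++ leaves r end.
Fixpoint labels (t : bt V) : seq V :=
  match t with Lf v => [:: v] | Nd v l r => v :: labels l ++ labels r end.
Fixpoint wt (t : bt V) : R :=
  match t with Lf _ => 0 | Nd v l r => d v (root l) + d v (root r) + wt l + wt r end.
Fixpoint graft (t : bt V) (u : V) (s : bt V) : bt V :=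
  match t with
  | Lf v => if v == u then Nd u (Lf u) s else Lf v
  | Nd v l r => if u \in leaves l then Nd v (graft l u s) r else Nd v l (graft r u s)
  end.

Lemma leaves_labels t y : y \in leaves t -> y \in labels t.
Proof.
elim: t => [v|v l IHl r IHr] /=; first by [].
by rewrite !inE !mem_cat => /orP[/IHl|/IHr] ->; rewrite ?orbT.
Qed.

Lemma graftP t u s : u \in leaves t ->
  [/\ root (graft t u s) = root t,
      forall y, y \in leaves (graft t u s) = (y \in leaves t) || (y \in leaves s),
      forall y, y \in labels (graft t u s) -> (y \in labels t) || (y \in labels s) &
      wt (graft t u s) = wt t + d u u + d u (root s) + wt s].
Proof.
elim: t => [v|v l IHl r IHr] /=.
  rewrite inE => /eqP ->; rewrite eqxx /=; split => //.
  - by move=> y; rewrite /= !inE.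
  - by move=> y; rewrite /= !inE ?mem_cat => /orP[->|/orP[->|->]]; rewrite ?orbT.
  - by rewrite /= !add0r addr0.
rewrite mem_cat; case: ifP => ul /= H.
  have [r1 l1 lab1 w1] := IHl ul; split => //.
  - by move=> y; rewrite !mem_cat l1; case: (y \in leaves l); case: (y \in leaves r); case: (y \in leaves s).
  - move=> y; rewrite !inE !mem_cat => /orP[->//|/orP[/lab1/orP[]->|->]]; by rewrite ?orbT.
  - by rewrite r1 w1; ring.
have ur : u \in leaves r by move: H; rewrite ?ul.
have [r1 l1 lab1 w1] := IHr ur; split => //.
- by move=> y; rewrite !mem_cat l1 -!orbA.
- move=> y; rewrite !inE !mem_cat => /orP[->//|/orP[->|/lab1/orP[]->]]; by rewrite ?orbT.
- by rewrite r1 w1; ring.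
Qed.

End Trees.

Section Build.
Variables (R : realType) (V E : finType) (eu ev : E -> V) (c : E -> R) (d : V -> V -> R).
Hypothesis c_ge0 : forall e, 0 <= c e.
Hypothesis d_refl : forall u, d u u = 0.
Hypothesis d_edge1 : forall e, d (eu e) (ev e) <= c e.
Hypothesis d_edge2 : forall e, d (ev e) (eu e) <= c e.

Local Notation cn F := (connect (adj eu ev F)).

Lemma adj_split (F : {set E}) e a b : e \in F -> adj eu ev F a b ->
  adj eu ev (F :\ e) a b \/ ((a == eu e) && (b == ev e) || (a == ev e) && (b == eu e)).
Proof.
move=> eF /existsP[e' /andP[e'F H]]; case: (eqVneq e' e) H => [->|ne] H.
  by right; case/orP: H => /andP[/eqP<- /eqP<-]; rewrite !eqxx ?orbT.
by left; apply/existsP; exists e'; rewrite !inE ne e'F.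
Qed.

Lemma cn_closed (F : {set E}) (A : pred V) :
  (forall a b, adj eu ev F a b -> a \in A -> b \in A) ->
  forall x y, cn F x y -> x \in A -> y \in A.
Proof.
move=> H x y /connectP[p pth ->]; elim: p x pth => [|z p IH] x //= /andP[a1 pth] xA.
exact: IH pth (H _ _ a1 xA).
Qed.

Lemma cn_sym (F : {set E}) x y : cn F x y = cn F y x.
Proof. exact: (adj_sym eu ev F). Qed.

Definition Wc (F : {set E}) x := \sum_(e in F | cn F x (eu e)) c e.

Lemma build_step (F : {set E}) e x a b t1 t2 :
  e \in F -> (a == eu e) && (b == ev e) || (a == ev e) && (b == eu e) ->
  d a b <= c e ->
  cn (F :\ e) x a -> ~~ cn (F :\ e) x b ->
  [/\ root t1 = x, forall y, cn (F :\ e) x y -> y \in leaves t1,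
      forall y, y \in labels t1 -> cn (F :\ e) x y & wt d t1 <= Wc (F :\ e) x] ->
  [/\ root t2 = b, forall y, cn (F :\ e) b y -> y \in leaves t2,
      forall y, y \in labels t2 -> cn (F :\ e) b y & wt d t2 <= Wc (F :\ e) b] ->
  exists t, [/\ root t = x, forall y, cn F x y -> y \in leaves t,
      forall y, y \in labels t -> cn F x y & wt d t <= Wc F x].
Proof.
move=> eF eab dab xa nxb [r1 lv1 lb1 w1] [r2 lv2 lb2 w2].
pose F1 := F :\ e.
have sF : F1 \subset F by apply: finset.subsetDl.
have cF y z : cn F1 y z -> cn F y z by apply: connect_adj_sub.
have adjab : adj eu ev F a b.
  by case/orP: eab => /andP[/eqP-> /eqP->]; [exact: adj_edge | rewrite adjC; exact: adj_edge].
have xb : cn F x b by apply: connect_trans (cF _ _ xa) (connect1 adjab).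
exists (graft t1 a t2).
have [gr glv glb gw] := graftP d t2 (lv1 _ xa).
split.
- by rewrite gr.
- move=> y xy; rewrite glv.
  have : y \in [predU [pred z | cn F1 x z] & [pred z | cn F1 b z]].
    apply: (cn_closed _ xy); last by rewrite !inE /= ?connect0.
    move=> p q /(adj_split eF) [Hpq|Hpq]; rewrite !inE /=.
      by move=> /orP[H|H]; [rewrite (connect_trans H (connect1 Hpq)) | rewrite (connect_trans H (connect1 Hpq)) orbT].
    move=> _; have : (q == a) || (q == b).
      by case/orP: eab Hpq => /andP[/eqP-> /eqP->] /orP[] /andP[_ /eqP->]; rewrite eqxx ?orbT.
    by case/orP => /eqP->; rewrite ?xa ?connect0 ?orbT.
  by rewrite inE /= => /orP[/lv1->|/lv2->]; rewrite ?orbT.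
- move=> y /glb /orP[/lb1/cF//|/lb2/cF]; exact: connect_trans xb.
- have eP : cn F x (eu e).
    by case/orP: eab => /andP[/eqP Ha /eqP Hb]; [rewrite -Ha; exact: cF | rewrite -Hb; exact: xb].
  rewrite gw d_refl addr0 r2 /Wc (bigD1 e) /=; last by rewrite eF eP.
  have key : Wc F1 x + Wc F1 b
      <= \sum_(e' | (e' \in F) && cn F x (eu e') && (e' != e)) c e'.
    rewrite /Wc [X in X + _ <= _]big_mkcond [X in _ + X <= _]big_mkcond
      [X in _ <= X]big_mkcond -big_split /=.
    apply: ler_sum => e' _; rewrite /F1 in_setD1.
    case: (eqVneq e' e) => [_|ne] /=; first by rewrite !andbF addr0.
    case e'F: (e' \in F) => /=; last by rewrite addr0.
    rewrite andbT.
    case Hx: (cn (F :\ e) x (eu e')); case Hb: (cn (F :\ e) b (eu e')).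
    + exfalso; move/negP: nxb; apply; apply: connect_trans Hx _.
      by rewrite (adj_sym eu ev (F :\ e)); exact: Hb.
    + by rewrite (cF _ _ Hx) addr0.
    + by rewrite (connect_trans xb (cF _ _ Hb)) add0r.
    + by rewrite addr0; case: ifP.
  lra.
Qed.

Lemma Wc_ge0 (F : {set E}) x : 0 <= Wc F x.
Proof. by apply: sumr_ge0 => e _; apply: c_ge0. Qed.

Lemma Wc_sub (F : {set E}) e x : Wc (F :\ e) x <= Wc F x.
Proof.
rewrite /Wc [X in X <= _]big_mkcond [X in _ <= X]big_mkcond /=.
apply: ler_sum => e' _; rewrite in_setD1.
case H: ((e' != e) && (e' \in F) && cn (F :\ e) x (eu e')); last by case: ifP => // _; apply: c_ge0.
by case/andP: H => /andP[_ ->] /(connect_adj_sub (finset.subsetDl F [set e])) ->.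
Qed.

Lemma build (F : {set E}) x : exists t, [/\ root t = x, forall y, cn F x y -> y \in leaves t,
      forall y, y \in labels t -> cn F x y & wt d t <= Wc F x].
Proof.
move: {2}#|F| (leqnn #|F|) => n; elim: n F x => [|n IH] F x HF.
  have F0 : F = finset.set0 by apply/eqP; rewrite -cards_eq0 -leqn0.
  exists (Lf x); split => //=.
  - move=> y xy; have H := @cn_closed F (pred1 x) _ _ _ xy; rewrite !inE eqxx in H.
    rewrite inE; apply: H => // p q /existsP[e']; rewrite F0 inE //.
  - by move=> y; rewrite inE => /eqP ->; rewrite connect0.
  - exact: Wc_ge0.
case: (set_0Vmem F) => [F0|[e eF]].
  exists (Lf x); split => //=.
  - move=> y xy; have H := @cn_closed F (pred1 x) _ _ _ xy; rewrite !inE eqxx in H.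
    rewrite inE; apply: H => // p q /existsP[e']; rewrite F0 inE //.
  - by move=> y; rewrite inE => /eqP ->; rewrite connect0.
  - exact: Wc_ge0.
have HF1 : (#|F :\ e| <= n)%N.
  by move: HF; rewrite (cardsD1 e F) eF add1n ltnS.
have [t1 H1] := IH _ x HF1.
case Hu: (cn (F :\ e) x (eu e)); case Hv: (cn (F :\ e) x (ev e)).
- exists t1; case: H1 => r1 lv1 lb1 w1; split => //.
  + move=> y xy; apply: lv1; apply: (cn_closed (A := [pred z | cn (F :\ e) x z])) xy _;
      last by rewrite inE /= connect0.
    move=> p q /(adj_split eF) [Hpq|Hpq]; rewrite !inE /=.
      by move=> H; apply: connect_trans H (connect1 Hpq).
    by move=> _; case/orP: Hpq => /andP[_ /eqP->].
  + by move=> y /lb1; apply: connect_adj_sub; apply: finset.subsetDl.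
  + exact: le_trans w1 (Wc_sub _ _ _).
- have [t2 H2] := IH _ (ev e) HF1.
  apply: (build_step (a := eu e) (b := ev e) eF) H1 H2 => //.
  + by rewrite !eqxx.
  + by rewrite Hv.
- have [t2 H2] := IH _ (eu e) HF1.
  apply: (build_step (a := ev e) (b := eu e) eF) H1 H2 => //.
  + by rewrite !eqxx orbT.
  + by rewrite Hu.
- exists t1; case: H1 => r1 lv1 lb1 w1; split => //.
  + move=> y xy; apply: lv1; apply: (cn_closed (A := [pred z | cn (F :\ e) x z])) xy _;
      last by rewrite inE /= connect0.
    move=> p q /(adj_split eF) [Hpq|Hpq]; rewrite !inE /=.
      by move=> H; apply: connect_trans H (connect1 Hpq).
    by case/orP: Hpq => /andP[/eqP-> _]; rewrite ?Hu ?Hv.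
  + by move=> y /lb1; apply: connect_adj_sub; apply: finset.subsetDl.
  + exact: le_trans w1 (Wc_sub _ _ _).
Qed.

End Build.


Lemma root_labels (V : eqType) (t : bt V) : root t \in labels t.
Proof. by case: t => [v|v l r] /=; rewrite inE eqxx. Qed.

Section Prune.
Variables (R : realType) (V : eqType) (d : V -> V -> R) (K : pred V) (inS : pred V).
Hypothesis d_ge0 : forall u v, 0 <= d u v.
Hypothesis d_tri : forall u v w, K u -> K v -> K w -> d u w <= d u v + d v w.

Fixpoint prune (t : bt V) : option (bt V) :=
  match t with
  | Lf v => if inS v then Some (Lf v) else None
  | Nd v l r => match prune l, prune r with
                | Some l', Some r' => Some (Nd v l' r')
                | Some l', None => Some l'
                | None, Some r' => Some r'
                | None, None => None
                end
  end.

Lemma wt_ge0 t : 0 <= wt d t.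
Proof. elim: t => [v|v l IHl r IHr] //=; rewrite !addr_ge0 ?d_ge0 //. Qed.

Lemma pruneP t :
  match prune t with
  | None => forall y, y \in leaves t -> ~~ inS y
  | Some t' => [/\ forall y, (y \in leaves t') = (y \in leaves t) && inS y,
                   forall y, y \in labels t' -> y \in labels t &
                   (forall p, K p -> (forall y, y \in labels t -> K y) ->
                       d p (root t') + wt d t' <= d p (root t) + wt d t)]
  end.
Proof.
elim: t => [v|v l IHl r IHr] /=.
  case: ifP => Sv /=.
    split => // y; first by rewrite inE; case: eqVneq => // ->; rewrite Sv.
  by move=> y; rewrite inE => /eqP ->; rewrite Sv.
have labl y : y \in labels l -> y \in v :: labels l ++ labels r.
  by rewrite inE mem_cat => ->; rewrite orbT.
have labr y : y \in labels r -> y \in v :: labels l ++ labels r.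
  by rewrite inE mem_cat => ->; rewrite !orbT.
case: (prune l) IHl => [l'|] IHl; case: (prune r) IHr => [r'|] IHr.
- case: IHl => lvl lbl wl; case: IHr => lvr lbr wr; split.
  + by move=> y; rewrite /= !mem_cat lvl lvr andb_orl.
  + move=> y; rewrite /= !inE !mem_cat => /orP[->//|/orP[/lbl|/lbr]] H; by rewrite H ?orbT.
  + move=> p Kp Kl /=.
    have Kv : K v by apply: Kl; rewrite inE eqxx.
    have := wl v Kv (fun y H => Kl y (labl y H)).
    have := wr v Kv (fun y H => Kl y (labr y H)).
    lra.
- case: IHl => lvl lbl wl; split.
  + by move=> y; rewrite /= !mem_cat lvl andb_orl; case: (boolP (y \in leaves r)) => H; rewrite ?orbF // (negbTE (IHr y H)) andbF orbF.
  + by move=> y /lbl /labl.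
  + move=> p Kp Kl /=.
    have Kv : K v by apply: Kl; rewrite inE eqxx.
    have Kl' : K (root l') by apply: Kl; apply: labl; apply: lbl; exact: root_labels.
    have := wl v Kv (fun y H => Kl y (labl y H)).
    have := d_tri Kp Kv Kl'.
    have := d_ge0 v (root r); have := wt_ge0 r.
    lra.
- case: IHr => lvr lbr wr; split.
  + by move=> y; rewrite /= !mem_cat lvr andb_orl; case: (boolP (y \in leaves l)) => H; rewrite ?orFb // (negbTE (IHl y H)) andbF.
  + by move=> y /lbr /labr.
  + move=> p Kp Kl /=.
    have Kv : K v by apply: Kl; rewrite inE eqxx.
    have Kr' : K (root r') by apply: Kl; apply: labr; apply: lbr; exact: root_labels.
    have := wr v Kv (fun y H => Kl y (labr y H)).
    have := d_tri Kp Kv Kr'.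
    have := d_ge0 v (root l); have := wt_ge0 l.
    lra.
- by move=> y; rewrite mem_cat => /orP[/IHl|/IHr].
Qed.

End Prune.


Section Decomp.
Variables (R : realType) (V : finType) (d : V -> V -> R) (K : pred V) (h1 : nat).
Variable (kap : {set V} -> \bar R).
Hypothesis d_ge0 : forall u v, 0 <= d u v.
Hypothesis kap_ge0 : forall A, (0 <= kap A)%E.
Hypothesis kap_mono : forall A B : {set V}, A \subset B -> (kap A <= kap B)%E.
Hypothesis kap_union : forall (A B : {set V}) x, x \in A -> x \in B -> (kap (A :|: B) <= kap A + kap B)%E.
Hypothesis kap_pair : forall u v, K u -> K v -> (kap [set u; v] <= (d u v)%:E)%E.
Hypothesis kap_set1 : forall v, kap [set v] = 0%E.

Local Notation h := h1.+1.

Fixpoint rm (t : bt V) : V := match t with Lf v => v | Nd _ _ r => rm r end.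
Fixpoint prm (t : bt V) : R := match t with Lf _ => 0 | Nd v _ r => d v (root r) + prm r end.
Definition pe (t : bt V) : V := match t with Lf v => v | Nd _ l _ => rm l end.
Definition pc (t : bt V) : R := match t with Lf _ => 0 | Nd v l _ => d v (root l) + prm l end.
Fixpoint top (t : bt V) (m : nat) : seq V :=
  match t with
  | Lf v => [:: v]
  | Nd v l r => match m with 0 => [:: rm l] | m'.+1 => top l m' ++ top r m' end
  end.
Fixpoint wtop (t : bt V) (m : nat) : R :=
  match t with
  | Lf v => 0
  | Nd v l r => match m with 0 => d v (root l) + prm l
               | m'.+1 => d v (root l) + d v (root r) + wtop l m' + wtop r m' end
  end.
Fixpoint comps (t : bt V) (m : nat) : seq (seq V) :=
  match t with
  | Lf v => [::]
  | Nd v l r => match m with 0 => (top l h1 ++ top r h1) :: (comps l h1 ++ comps r h1)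
               | m'.+1 => comps l m' ++ comps r m' end
  end.
Fixpoint Sw (t : bt V) (m : nat) : R :=
  match t with
  | Lf v => 0
  | Nd v l r => match m with
      | 0 => d v (root l) + prm l + (d v (root l) + d v (root r) + Sw l h1 + Sw r h1)
      | m'.+1 => d v (root l) + d v (root r) + Sw l m' + Sw r m' end
  end.

Definition allK (t : bt V) := forall y, y \in labels t -> K y.

Lemma allK_l v l r : allK (Nd v l r) -> allK l.
Proof. by move=> H y Hy; apply: H; rewrite inE mem_cat Hy orbT. Qed.
Lemma allK_r v l r : allK (Nd v l r) -> allK r.
Proof. by move=> H y Hy; apply: H; rewrite inE mem_cat Hy !orbT. Qed.
Lemma allK_v v l r : allK (Nd v l r) -> K v.
Proof. by move=> H; apply: H; rewrite inE eqxx. Qed.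
Lemma allK_root t : allK t -> K (root t).
Proof. by move=> H; apply: H; apply: root_labels. Qed.

Lemma kap_chain (u w : V) (A : {set V}) (x : R) :
  K u -> K w -> w \in A -> (kap A <= x%:E)%E -> (kap (u |: A) <= (d u w + x)%:E)%E.
Proof.
move=> Ku Kw wA HA.
have sub : u |: A \subset [set u; w] :|: A.
  apply/fintype.subsetP => z; rewrite !inE => /orP[->|->]; by rewrite ?orbT.
apply: le_trans (kap_mono sub) _.
have wA' : w \in [set u; w] by rewrite !inE eqxx orbT.
apply: le_trans (kap_union wA' wA) _.
by rewrite EFinD; apply: leeD => //; apply: kap_pair.
Qed.

Lemma rm_cost t : allK t -> (kap [set root t; rm t] <= (prm t)%:E)%E.
Proof.
elim: t => [v|v l _ r IHr] /= Kt.
  by rewrite finset.setUid kap_set1.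
have sub : [set v; rm r] \subset v |: [set root r; rm r].
  apply/fintype.subsetP => z; rewrite !inE => /orP[->|->]; by rewrite ?orbT.
apply: le_trans (kap_mono sub) _.
apply: kap_chain (allK_v Kt) (allK_root (allK_r Kt)) _ (IHr (allK_r Kt)).
by rewrite !inE eqxx.
Qed.

Lemma top_cost t m : allK t -> (kap (root t |: [set:: top t m]) <= (wtop t m)%:E)%E.
Proof.
elim: t m => [v|v l IHl r IHr] m /= Kt.
  have -> : v |: [set:: [:: v]] = [set v].
    by apply/setP => z; rewrite !inE ?orbF ?orbb.
  by rewrite kap_set1.
have Kv := allK_v Kt; have Kl := allK_l Kt; have Kr := allK_r Kt.
case: m => [|m].
  have -> : v |: [set:: [:: rm l]] = [set v; rm l].
    by apply/setP => z; rewrite !inE ?orbF.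
  have sub : [set v; rm l] \subset v |: [set root l; rm l].
    apply/fintype.subsetP => z; rewrite !inE => /orP[->|->]; by rewrite ?orbT.
  apply: le_trans (kap_mono sub) _.
  apply: kap_chain Kv (allK_root Kl) _ (rm_cost Kl).
  by rewrite !inE eqxx.
have sub : v |: [set:: top l m ++ top r m] \subset
    (v |: (root l |: [set:: top l m])) :|: (v |: (root r |: [set:: top r m])).
  apply/fintype.subsetP => z; rewrite !inE mem_cat => /orP[->|/orP[->|->]]; by rewrite ?orbT.
apply: le_trans (kap_mono sub) _.
have vin1 : v \in v |: (root l |: [set:: top l m]) by rewrite !inE eqxx.
have vin2 : v \in v |: (root r |: [set:: top r m]) by rewrite !inE eqxx.
apply: le_trans (kap_union vin1 vin2) _.
have -> : d v (root l) + d v (root r) + wtop l m + wtop r m =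
  (d v (root l) + wtop l m) + (d v (root r) + wtop r m) by ring.
rewrite EFinD; apply: leeD.
  apply: kap_chain Kv (allK_root Kl) _ (IHl m Kl); by rewrite !inE eqxx.
apply: kap_chain Kv (allK_root Kr) _ (IHr m Kr); by rewrite !inE eqxx.
Qed.

Definition kr (A : {set V}) : R := fine (kap A).

Lemma kr_fin A x : (kap A <= x%:E)%E -> kap A = (kr A)%:E /\ kr A <= x.
Proof.
move=> H; have fA : kap A \is a fin_num.
  by rewrite ge0_fin_numE ?kap_ge0 //; apply: le_lt_trans H _; rewrite ltry.
split; first by rewrite /kr fineK.
by rewrite -lee_fin /kr fineK.
Qed.

Lemma top_kap t m : allK t -> (kap [set:: top t m] <= (wtop t m)%:E)%E.
Proof.
move=> Kt; apply: le_trans (top_cost m Kt).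
by apply: kap_mono; apply: finset.subsetUr.
Qed.

Lemma comps_cost t m : allK t ->
  (forall c, c \in comps t m -> kap [set:: c] = (kr [set:: c])%:E) /\
  \sum_(c <- comps t m) kr [set:: c] + wtop t m <= Sw t m.
Proof.
elim: t m => [v|v l IHl r IHr] m /= Kt.
  by split => //; rewrite big_nil add0r.
have Kl := allK_l Kt; have Kr := allK_r Kt.
case: m => [|m].
  have [Hl1 Hl2] := IHl h1 Kl; have [Hr1 Hr2] := IHr h1 Kr.
  have [T1 T2] := kr_fin (top_kap h Kt).
  split.
    move=> c; rewrite inE mem_cat => /orP[/eqP->|/orP[/Hl1|/Hr1]] //.
  rewrite big_cons big_cat /=.
  move: T2 => /=; lra.
have [Hl1 Hl2] := IHl m Kl; have [Hr1 Hr2] := IHr m Kr.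
split.
  by move=> c; rewrite mem_cat => /orP[/Hl1|/Hr1].
rewrite big_cat /=; lra.
Qed.

Lemma prm_ge0 t : 0 <= prm t.
Proof. elim: t => [v|v l _ r IHr] //=; by rewrite addr_ge0 ?d_ge0. Qed.

Lemma avg t : \sum_(0 <= m < h) Sw t m + prm t <= h.+1%:R * wt d t.
Proof.
elim: t => [v|v l IHl r IHr] /=.
  by rewrite big1 ?addr0 ?mulr0.
rewrite big_nat_recl //= !big_split /= !sumr_const_nat subn0.
move: IHl IHr; rewrite !big_nat_recr //= -!natr1.
rewrite -[d v (root l) *+ h1]mulr_natl -[d v (root r) *+ h1]mulr_natl.
set H := h1%:R.
have := d_ge0 v (root l); have := d_ge0 v (root r).
move: (Sw l h1) (Sw r h1) (\sum_(0 <= i < h1) Sw l i) (\sum_(0 <= i < h1) Sw r i) => a b x y.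
move: (d v (root l)) (d v (root r)) (wt d l) (wt d r) (prm l) (prm r) => p q wl wr ql qr.
move=> *.
have -> : (H + 1 + 1) * (p + q + wl + wr) = (H + 1) * wl + wl + ((H + 1) * wr + wr) + H * p + H * q + 2 * p + 2 * q by ring.
lra.
Qed.

Lemma best t : exists2 m, (m < h)%N & Sw t m <= (1 + h%:R^-1) * wt d t.
Proof.
case: (boolP [exists m : 'I_h, Sw t m <= (1 + h%:R^-1) * wt d t]).
  by case/existsP => m Hm; exists m.
move=> /existsPn H; exfalso.
have Hlt : forall m, (0 <= m < h)%N -> (1 + h%:R^-1) * wt d t < Sw t m.
  move=> m /andP[_ mh]; rewrite ltNge; exact: (H (Ordinal mh)).
have := ltr_sum_nat (isT : (0 < h)%N) Hlt.
rewrite sumr_const_nat subn0 => Hs.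
have := avg t; have := prm_ge0 t.
have hE : (1 + h%:R^-1) * wt d t *+ h = h.+1%:R * wt d t.
  rewrite -mulr_natr mulrAC mulrDl mul1r mulVf ?pnatr_eq0 // -natr1; ring.
rewrite hE in Hs; lra.
Qed.

Lemma top_size t m : (size (top t m) <= 2 ^ m)%N.
Proof.
elim: t m => [v|v l IHl r IHr] m /=; first by rewrite expn_gt0.
case: m => [|m] //=; rewrite size_cat expnS mul2n -addnn.
exact: leq_add (IHl m) (IHr m).
Qed.

Lemma rm_leaves t : rm t \in leaves t.
Proof. elim: t => [v|v l _ r IHr] /=; by rewrite ?inE ?mem_cat ?IHr ?orbT. Qed.

Lemma top_leaves t m y : y \in top t m -> y \in leaves t.
Proof.
elim: t m => [v|v l IHl r IHr] [|m] //=; rewrite ?mem_cat.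
- by rewrite inE => /eqP ->; rewrite rm_leaves.
- by case/orP => [/IHl|/IHr] ->; rewrite ?orbT.
Qed.

Lemma comps_leaves t m c y : c \in comps t m -> y \in c -> y \in leaves t.
Proof.
elim: t m => [v|v l IHl r IHr] [|m] //=; rewrite ?inE ?mem_cat.
- case/orP => [/eqP->|/orP[/IHl H|/IHr H]]; rewrite ?mem_cat.
  + by case/orP => [/top_leaves|/top_leaves] ->; rewrite ?orbT.
  + by move/H ->.
  + by move/H ->; rewrite orbT.
- case/orP => [/IHl H|/IHr H] /H ->; by rewrite ?orbT.
Qed.

Lemma comps_size t m c : c \in comps t m -> (size c <= 2 ^ h)%N.
Proof.
elim: t m => [v|v l IHl r IHr] [|m] //=; rewrite ?inE ?mem_cat.
- case/orP => [/eqP->|/orP[/IHl|/IHr]] //.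
  by rewrite size_cat expnS mul2n -addnn; apply: leq_add; apply: top_size.
- by case/orP => [/IHl|/IHr].
Qed.

Definition hrel (H : seq (seq V)) : rel V := fun x y => has (fun c => (x \in c) && (y \in c)) H.

Lemma hrel_sym H : connect_sym (hrel H).
Proof.
apply: sym_connect_sym => x y; rewrite /hrel; apply: eq_has => c; exact: andbC.
Qed.

Lemma hcon_mono (H1 H2 : seq (seq V)) :
  (forall c, c \in H1 -> exists2 c', c' \in H2 & {subset c <= c'}) ->
  forall x y, connect (hrel H1) x y -> connect (hrel H2) x y.
Proof.
move=> HH; apply: connect_sub => x y /hasP[c cH /andP[xc yc]].
have [c' c'H sc] := HH c cH; apply: connect1; apply/hasP; exists c' => //.
by rewrite !sc.
Qed.

Lemma hcon_in (H : seq (seq V)) c x y : c \in H -> x \in c -> y \in c -> connect (hrel H) x y.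
Proof. by move=> cH xc yc; apply: connect1; apply/hasP; exists c => //; rewrite xc yc. Qed.

Lemma top_ne t m : exists b, b \in top t m.
Proof.
elim: t m => [v|v l IHl r IHr] [|m] /=; try by exists v; rewrite inE.
  by exists (rm l); rewrite inE.
by have [b Hb] := IHl m; exists b; rewrite mem_cat Hb.
Qed.

Lemma conn t m a : a \in leaves t ->
  exists2 b, b \in top t m & connect (hrel (top t m :: comps t m)) a b.
Proof.
elim: t m a => [v|v l IHl r IHr] m a /=.
  by rewrite inE => /eqP->; exists v; rewrite ?inE ?connect0.
move=> Ha; case: m => [|m].
  set HH := _ :: _ :: _.
  have sl : forall x y, connect (hrel (top l h1 :: comps l h1)) x y -> connect (hrel HH) x y.
    apply: hcon_mono => c; rewrite inE => /orP[/eqP->|cH].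
      exists (top l h1 ++ top r h1); first by rewrite !inE eqxx orbT.
      by move=> z zc; rewrite mem_cat zc.
    by exists c => //; rewrite !inE mem_cat cH !orbT.
  have sr : forall x y, connect (hrel (top r h1 :: comps r h1)) x y -> connect (hrel HH) x y.
    apply: hcon_mono => c; rewrite inE => /orP[/eqP->|cH].
      exists (top l h1 ++ top r h1); first by rewrite !inE eqxx orbT.
      by move=> z zc; rewrite mem_cat zc orbT.
    by exists c => //; rewrite !inE mem_cat cH !orbT.
  have mid : in_mem (top l h1 ++ top r h1) (mem HH) by rewrite !inE eqxx orbT.
  have [b' b'in b'c] := IHl h1 _ (rm_leaves l).
  exists (rm l); first by rewrite inE.
  move: Ha; rewrite mem_cat => /orP[al|ar].
    have [b bin bc] := IHl h1 _ al.
    apply: connect_trans (sl _ _ bc) _.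
    apply: connect_trans (hcon_in mid (_ : b \in _) (_ : b' \in _)) _;
      rewrite ?mem_cat ?bin ?b'in //.
    by rewrite hrel_sym; apply: sl.
  have [b bin bc] := IHr h1 _ ar.
  apply: connect_trans (sr _ _ bc) _.
  apply: connect_trans (hcon_in mid (_ : b \in _) (_ : b' \in _)) _;
    rewrite ?mem_cat ?bin ?b'in ?orbT //.
  by rewrite hrel_sym; apply: sl.
move: Ha; rewrite mem_cat => /orP[al|ar].
  have [b bin bc] := IHl m _ al; exists b; first by rewrite mem_cat bin.
  apply: hcon_mono bc => c; rewrite inE => /orP[/eqP->|cH].
    by exists (top l m ++ top r m); [rewrite inE eqxx | move=> z zc; rewrite mem_cat zc].
  by exists c => //; rewrite inE mem_cat cH orbT.
have [b bin bc] := IHr m _ ar; exists b; first by rewrite mem_cat bin orbT.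
apply: hcon_mono bc => c; rewrite inE => /orP[/eqP->|cH].
  by exists (top l m ++ top r m); [rewrite inE eqxx | move=> z zc; rewrite mem_cat zc orbT].
by exists c => //; rewrite inE mem_cat cH !orbT.
Qed.

End Decomp.


Lemma leb_mono (R : realType) (A B : set R) : (A `<=` B)%classic ->
  (lebesgue_measure A <= lebesgue_measure B)%E.
Proof.
move=> AB.
rewrite /lebesgue_measure /lebesgue_stieltjes_measure /measure_extension.
exact: le_mu_ext.
Qed.

Lemma tmeas_mono (R : realType) (P : R -> Prop) (t0 t : R) : t0 <= t -> tmeas P t0 <= tmeas P t.
Proof.
move=> tt.
have sub1 : ([set s : R | 0 <= s /\ s < t0 /\ P s] `<=` [set s : R | 0 <= s /\ s < t /\ P s])%classic.
  by move=> s [? [? ?]]; split => //; split => //; apply: lt_le_trans tt.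
have sub2 : ([set s : R | 0 <= s /\ s < t /\ P s] `<=` [set` `[0, t[%R])%classic.
  by move=> s [s0 [st _]]; rewrite /= in_itv /= s0 st.
have fin : (lebesgue_measure ([set` `[0, t[%R] : set R) \is a fin_num)%E.
  by rewrite lebesgue_measure_itv /=; case: ifP.
have ge0 X : (0 <= lebesgue_measure (X : set R))%E.
  rewrite /lebesgue_measure /lebesgue_stieltjes_measure /measure_extension; exact: mu_ext_ge0.
have fin2 X : (X `<=` [set` `[0, t[%R])%classic -> (lebesgue_measure X \is a fin_num)%E.
  move=> sX; rewrite ge0_fin_numE ?ge0 //; apply: le_lt_trans (leb_mono sX) _.
  by move: fin; rewrite ge0_fin_numE ?ge0.
rewrite /tmeas; apply: fine_le; [apply: fin2; exact: subset_trans sub1 sub2 | exact: fin2 | exact: leb_mono].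
Qed.

Definition hr (V : finType) (Sk : {set {set V}}) : rel V :=
  fun a b => [exists T in Sk, (a \in T) && (b \in T)].

Lemma connect_closed (T : finType) (e : rel T) (A : pred T) :
  (forall a b, e a b -> a \in A -> b \in A) ->
  forall x y, connect e x y -> x \in A -> y \in A.
Proof.
move=> H x y /connectP[p pth ->]; elim: p x pth => [|z p IH] x //= /andP[a1 pth] xA.
exact: IH pth (H _ _ a1 xA).
Qed.

Section Gain.
Variables (R : realType) (V E : finType) (eu ev : E -> V) (c : E -> R)
  (D : {set {set V}}) (eps : R) (F : R -> {set E}) (Act : R -> {set {set V}}).
Hypothesis vr : valid_run eu ev c D eps F Act.

Lemma F_mono t0 t : 0 <= t0 -> t0 <= t -> F t0 \subset F t.
Proof.
case: vr => HF _ _ t00 tt.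
rewrite (HF t0) // (HF t) ?(le_trans t00 tt) //.
apply/fintype.subsetP => e; rewrite !inE => H; apply: le_trans H _.
rewrite /load; apply: ler_sum => S _; exact: tmeas_mono.
Qed.

Lemma act_comp t X u : 0 <= t -> X \in Act t -> u \in X -> X = Defs.comp eu ev (F t) u.
Proof.
case: vr => _ HA _ t0; rewrite HA // inE => /andP[/imsetP[y _ ->] _]; rewrite inE => yu.
apply/setP => z; rewrite !inE.
by rewrite (same_connect (adj_sym eu ev (F t)) yu).
Qed.

Lemma tau_le t w : 0 <= t -> (forall Z, Z \in Act t -> w \notin Z) -> (tau Act w <= t%:E)%E.
Proof.
move=> t0 H; rewrite /tau; apply: ge_ereal_sup => _ [t' [t'0 Ht'] <-].
rewrite lee_fin leNgt; apply/negP => tt'.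
have [Z ZA wZ] := Ht' t t0 tt'.
by move: (H Z ZA); rewrite wZ.
Qed.

Lemma merged_conn t (Sk : {set {set V}}) (S : {set V}) : 0 <= t ->
  act_conn_set eu ev F Act S ->
  (forall T, T \in Sk -> T \subset S) ->
  (forall u v, u \in S -> v \in S -> connect (hr Sk) u v) ->
  connect (mrel Act Sk t) =2 connect (mrel Act [set S] t).
Proof.
move=> t0 acS subS conS X Y; apply/idP/idP.
  apply: connect_sub => {}X {}Y /and3P[XA YA /existsP[T /andP[TSk /andP[TX TY]]]].
  apply: connect1; apply/and3P; split => //; apply/existsP; exists S; rewrite inE eqxx /=.
  move: TX TY; rewrite -!setI_eq0 => /set0Pn[u]; rewrite inE => /andP[uT uX] /set0Pn[v].
  rewrite inE => /andP[vT vY]; apply/andP; split; apply/set0Pn.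
    by exists u; rewrite inE uX (fintype.subsetP (subS _ TSk) _ uT).
  by exists v; rewrite inE vY (fintype.subsetP (subS _ TSk) _ vT).
apply: connect_sub => {}X {}Y /and3P[XA YA /existsP[S' /andP[]]].
rewrite inE => /eqP-> /andP[].
rewrite -!setI_eq0 => /set0Pn[u]; rewrite inE => /andP[uS uX] /set0Pn[v].
rewrite inE => /andP[vS vY].
case: (boolP [forall w in S, exists Z in Act t, w \in Z]) => [/forallP allA|].
  have Hcl : v \in [pred w | (w \in S) ==> [forall Z in Act t, (w \in Z) ==> connect (mrel Act Sk t) X Z]].
    apply: (connect_closed _ (conS _ _ uS vS)).
      move=> a b /existsP[T /andP[TSk /andP[aT bT]]]; rewrite !inE => /implyP Ha.
      have aS := fintype.subsetP (subS _ TSk) _ aT.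
      apply/implyP => bS; apply/forallP => Z; apply/implyP => ZA; apply/implyP => bZ.
      have /existsP[Za /andP[ZaA aZa]] := implyP (allA a) aS.
      have := forallP (Ha aS) Za; rewrite ZaA aZa /= => XZa.
      apply: connect_trans XZa (connect1 _); apply/and3P; split => //.
      apply/existsP; exists T; rewrite TSk /=; apply/andP; split; rewrite -setI_eq0; apply/set0Pn.
        by exists a; rewrite inE aT.
      by exists b; rewrite inE bT.
    rewrite inE uS /=; apply/forallP => Z; apply/implyP => ZA; apply/implyP => uZ.
    by rewrite (act_comp t0 ZA uZ) -(act_comp t0 XA uX) connect0.
  move: Hcl; rewrite inE vS /= => /forallP/(_ Y); rewrite YA vY.
  by [].
rewrite negb_forall_in => /existsP[w /andP[wS]]; rewrite negb_exists => /forallP nw.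
have tw : (tau Act w <= t%:E)%E.
  apply: tau_le => // Z ZA; move: (nw Z); by rewrite ZA.
have inc z : z \in S -> z \in Defs.comp eu ev (F t) w.
  move=> zS; have [t1 [t10 zt1 t1w _]] := acS w z wS zS.
  have t1t : t1 <= t by rewrite -lee_fin (le_trans t1w tw).
  move: zt1; rewrite !inE; apply: connect_adj_sub; exact: F_mono.
have -> : X = Y.
  rewrite (act_comp t0 XA uX) (act_comp t0 YA vY).
  apply/setP => z; rewrite !inE.
  have := inc u uS; have := inc v vS; rewrite !inE => wv wu.
  rewrite -(same_connect (adj_sym eu ev (F t)) wu) (same_connect (adj_sym eu ev (F t)) wv) //.
by rewrite connect0.
Qed.

Lemma gain_eq (Sk : {set {set V}}) (S : {set V}) :
  act_conn_set eu ev F Act S ->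
  (forall T, T \in Sk -> T \subset S) ->
  (forall u v, u \in S -> v \in S -> connect (hr Sk) u v) ->
  gain Act Sk = gain Act [set S].
Proof.
move=> acS subS conS; rewrite /gain; congr (_ * _)%E.
apply: eq_integral => t; rewrite inE /= => t0.
have H := merged_conn t0 acS subS conS.
suff -> : merged Act Sk t = merged Act [set S] t by [].
rewrite /merged; apply: eq_imset => X; apply: eq_bigl => Y; by rewrite H.
Qed.

End Gain.


Lemma sum_undup (R : realType) (T : eqType) (s : seq T) (f : T -> \bar R) :
  (forall x, (0 <= f x)%E) -> (\sum_(x <- undup s) f x <= \sum_(x <- s) f x)%E.
Proof.
move=> f0; elim: s => [|x s IH] /=; first by [].
rewrite big_cons; case: ifP => xs.
  by apply: le_trans IH _; rewrite leeDr.
by rewrite big_cons leeD2l.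
Qed.

Lemma sum_setseq (R : realType) (T : finType) (s : seq T) (f : T -> \bar R) :
  (forall x, (0 <= f x)%E) -> (\sum_(x in [set:: s]) f x <= \sum_(x <- s) f x)%E.
Proof.
move=> f0; apply: le_trans (sum_undup s f0).
have -> : (\sum_(x in [set:: s]) f x = \sum_(x in undup s) f x)%E.
  by apply: eq_bigl => x; rewrite inE mem_undup.
by rewrite -(big_uniq _ (undup_uniq s)).
Qed.

Section Final.
Variables (R : realType) (V E : finType) (eu ev : E -> V) (c : E -> R).
Hypothesis c_ge0 : forall e, 0 <= c e.

Local Notation cst := (cost eu ev c).

Definition dd (u v : V) : R := fine (cst [set u; v]).

Lemma dd_ge0 u v : 0 <= dd u v.
Proof. exact/fine_ge0/(cost_ge0 eu ev c_ge0). Qed.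

Lemma dd_refl u : dd u u = 0.
Proof. by rewrite /dd finset.setUid (cost_set1 eu ev c_ge0). Qed.

Lemma fine_le_fin (x : \bar R) (y : R) : (0 <= x)%E -> (x <= y%:E)%E -> x = (fine x)%:E /\ fine x <= y.
Proof.
move=> x0 xy; have fx : x \is a fin_num.
  by rewrite ge0_fin_numE //; apply: le_lt_trans xy _; rewrite ltry.
by split; [rewrite fineK | rewrite -lee_fin fineK].
Qed.

Lemma dd_edge1 e : dd (eu e) (ev e) <= c e.
Proof. exact: (fine_le_fin (cost_ge0 eu ev c_ge0 _) (cost_edge eu ev c e)).2. Qed.

Lemma dd_edge2 e : dd (ev e) (eu e) <= c e.
Proof. by rewrite /dd finset.setUC; exact: dd_edge1. Qed.

Variable (F0 : {set E}) (x0 : V).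
Local Notation K := [pred y | connect (adj eu ev F0) x0 y].

Lemma pair_fin u v : u \in K -> v \in K -> cst [set u; v] = (dd u v)%:E /\ dd u v <= \sum_(e in F0) c e.
Proof.
rewrite !inE => xu xv; apply: fine_le_fin; first exact: (cost_ge0 eu ev c_ge0).
apply: (cost_le c); apply/connectsP => a b; rewrite !inE => /orP[] /eqP-> /orP[] /eqP->;
  rewrite ?connect0 //.
- by apply: connect_trans xv; rewrite (adj_sym eu ev F0).
- by apply: connect_trans xu; rewrite (adj_sym eu ev F0).
Qed.

Lemma dd_tri u v w : K u -> K v -> K w -> dd u w <= dd u v + dd v w.
Proof.
move=> Ku Kv Kw.
have [E1 _] := pair_fin Ku Kw; have [E2 _] := pair_fin Ku Kv; have [E3 _] := pair_fin Kv Kw.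
rewrite -lee_fin EFinD -E1 -E2 -E3.
have sub : [set u; w] \subset [set u; v] :|: [set v; w].
  apply/fintype.subsetP => z; rewrite !inE => /orP[->|->]; by rewrite ?orbT.
apply: le_trans (cost_mono eu ev c sub) _.
apply: (cost_union eu ev c_ge0 (x := v)); by rewrite !inE eqxx ?orbT.
Qed.

Lemma kap_pairK u v : K u -> K v -> (cst [set u; v] <= (dd u v)%:E)%E.
Proof. by move=> Ku Kv; rewrite (pair_fin Ku Kv).1. Qed.

End Final.


Theorem lemma3p8 (R : realType) (V E : finType) (eu ev : E -> V)
  (c : E -> R) (D : {set {set V}}) (eps : R)
  (F : R -> {set E}) (Act : R -> {set {set V}}) (k : nat) (S : {set V}) :
  (forall e, 0 <= c e) ->
  (forall d, d \in D -> #|d| = 2%N) ->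
  0 <= eps ->
  valid_run eu ev c D eps F Act ->
  (2 <= k)%N ->
  act_conn_set eu ev F Act S ->
  exists Sk : {set {set V}},
    [/\ (forall T, T \in Sk -> T \subset S /\ (#|T| <= k)%N),
        (\sum_(T in Sk) cost eu ev c T
           <= (1 + ((trunc_log 2 k)%:R)^-1)%:E * cost eu ev c S)%E &
        gain Act Sk = gain Act [set S]].
Proof.
move=> c_ge0 _ _ vr k2 acS.
have h_gt0 : (0 < trunc_log 2 k)%N by rewrite trunc_log_gt0.
have hk : (2 ^ trunc_log 2 k <= k)%N by apply: trunc_logP => //; apply: leq_trans k2.
have [h1 hE] : exists h1, trunc_log 2 k = h1.+1 by exists (trunc_log 2 k).-1; rewrite prednK.
rewrite hE; rewrite hE in hk.
have coef0 : 0 <= 1 + (h1.+1%:R : R)^-1 by rewrite addr_ge0 // invr_ge0.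
case: (set_0Vmem S) => [S0|[x xS]].
  exists finset.set0; split.
  - by move=> T; rewrite inE.
  - rewrite big_pred0; last by move=> T; rewrite inE.
    by apply: mule_ge0; [rewrite lee_fin | exact: (cost_ge0 eu ev c_ge0)].
  - apply: (gain_eq vr acS); first by move=> T; rewrite inE.
    by move=> u v; rewrite S0 inE.
have cT : connects eu ev [set: E] S.
  apply/connectsP => u v uS vS; have [t0 [_ H _ _]] := acS u v uS vS.
  move: H; rewrite inE; apply: connect_adj_sub; exact: finset.subsetT.
have [Hinf|[F0 cF0 costE]] := cost_cases eu ev c S.
  by have := cost_le c cT; rewrite Hinf leye_eq.
pose d := dd eu ev c.
have dge0 : forall u v, 0 <= d u v by exact: dd_ge0.
have dtri := @dd_tri _ _ _ eu ev c c_ge0 F0 x.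
have [t [rt lvt lbt wtt]] := build c_ge0 (dd_refl eu ev c_ge0) (dd_edge1 eu ev c_ge0) (dd_edge2 eu ev c_ge0) F0 x.
have Kx : connect (adj eu ev F0) x x by rewrite connect0.
have := pruneP (fun y => y \in S) dge0 dtri t.
case Ep: (prune _ t) => [t'|]; last first.
  by move=> /(_ x (lvt x Kx)); rewrite xS.
case=> lv' lb' w'.
have allK' : allK [pred y | connect (adj eu ev F0) x y] t'.
  by move=> y /lb' /lbt; rewrite inE.
have wt'le : wt d t' <= \sum_(e in F0) c e.
  have H := w' x Kx (fun y Hy => lbt y Hy).
  rewrite rt /d dd_refl // add0r in H.
  have := dge0 x (root t'); have : Wc eu ev c F0 x <= \sum_(e in F0) c e.
    rewrite /Wc [X in X <= _]big_mkcond [X in _ <= X]big_mkcond /=.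
    apply: ler_sum => e _; case: (e \in F0) => //=; case: ifP => // _; exact: c_ge0.
  move: wtt; rewrite /d; lra.
have [m mh Sm] := best h1 dge0 t'.
pose H := top t' m :: comps h1 t' m.
have leafS y : y \in leaves t' -> y \in S by rewrite lv' => /andP[].
have memH c0 y : c0 \in H -> y \in c0 -> y \in leaves t'.
  rewrite inE => /orP[/eqP->|cH]; [exact: top_leaves | exact: comps_leaves cH].
have sizeH c0 : c0 \in H -> (size c0 <= 2 ^ h1.+1)%N.
  rewrite inE => /orP[/eqP->|/comps_size //].
  apply: leq_trans (top_size t' m) _; rewrite leq_exp2l //; exact: ltnW.
have subS T : T \in [set:: [seq [set:: c0] | c0 <- H]] -> T \subset S.
  rewrite inE => /mapP[c0 c0H ->]; apply/fintype.subsetP => y; rewrite inE => yc.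
  exact: leafS (memH _ _ c0H yc).
exists [set:: [seq [set:: c0] | c0 <- H]]; split.
- move=> T TS; split; first exact: subS.
  move: TS; rewrite inE => /mapP[c0 c0H ->].
  rewrite cardsE; apply: leq_trans (card_size c0) _; apply: leq_trans (sizeH _ c0H) hk.
- rewrite costE.
  have kmono := fun A B => @cost_mono _ _ _ eu ev c A B.
  have kunion := fun A B y => @cost_union _ _ _ eu ev c c_ge0 A B y.
  have kpair := fun u v => @kap_pairK _ _ _ eu ev c c_ge0 F0 x u v.
  have kge0 := cost_ge0 eu ev c_ge0.
  have kset1 := cost_set1 eu ev c_ge0.
  apply: le_trans (@sum_setseq _ _ [seq [set:: c0] | c0 <- H] (cost eu ev c) kge0) _.
  rewrite big_map big_cons /=.
  have [cc1 cc2] := comps_cost h1 kge0 kmono kunion kpair kset1 m allK'.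
  have tk := top_kap kmono kunion kpair kset1 m allK'.
  rewrite (eq_big_seq (fun c0 => (kr (cost eu ev c) [set:: c0])%:E)); last by move=> c0 /cc1.
  rewrite sumEFin.
  apply: le_trans (leeD tk (lexx _)) _; rewrite -EFinD -EFinM lee_fin.
  have := ler_wpM2l coef0 wt'le.
  move: cc2 Sm; rewrite /d => h1p h2p h3p; apply: le_trans h3p; rewrite addrC; exact: le_trans h1p h2p.
- apply: (gain_eq vr acS) => //.
  move=> u v uS vS.
  move/connectsP: cF0 => cF0'.
  have leafu y : y \in S -> y \in leaves t'.
    by move=> yS; rewrite lv' yS andbT; apply: lvt; exact: cF0'.
  have [b bt ub] := conn h1 m (leafu u uS).
  have [b' b't vb'] := conn h1 m (leafu v vS).
  have HH : connect (hrel H) u v.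
    apply: connect_trans ub _; apply: connect_trans (hcon_in (mem_head _ _) bt b't) _.
    by rewrite hrel_sym.
  move: HH; apply: connect_sub => a a' /hasP[c0 c0H /andP[ac a'c]].
  apply: connect1; apply/existsP; exists [set:: c0].
  apply/andP; split; first by rewrite inE; apply/mapP; exists c0.
  by rewrite !inE ac a'c.
Qed.
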